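(* Let $H=\sum_{i=1}^d \epsilon_i |e_i\rangle\langle e_i|$ be the Hamiltonian of a $d$-dimensional quantum system and let $\rho=\sum_{i=1}^d p_i|e_i\rangle\langle e_i|$ be a full-rank state, with $\epsilon$-$s$ ensemble $\mathcal V(\rho)=\{\boldsymbol v_i=(\epsilon_i,-\log p_i):1\le i\le d\}$. For an integer $k\ge1$ let $$\mathcal V_k(\rho)=\Big\{\tfrac1k\sum_{i=1}^d c_i\boldsymbol v_i \;:\; c_i\in\mathbb{N}\cup\{0\},\ \sum_{i=1}^d c_i=k\Big\}.$$ Then $\rho$ is $k$-passive if and only if $[\rho,H]=0$ and $\mathcal V_k(\rho)$ is a totally ordered subset of $\mathbb{R}^2$.
   Context: A state $\sigma$ of a system with Hamiltonian $K$ is passive if $\mathrm{tr}(KU\sigma U^\dagger)\ge\mathrm{tr}(K\sigma)$ for all unitaries $U$. A state $\rho$ with Hamiltonian $H$ is $k$-passive if $\rho^{\otimes k}$ is passive with respect to the Hamiltonian $\sum_{i=1}^k H_i$ on $k$ copies, where $H_i$ is $H$ acting on the $i$-th copy. In $\mathbb{R}^2$, $(x_i,y_i)\le(x_j,y_j)$ means $x_i\le x_j$ and $y_i\le y_j$; a set is totally ordered if any two of its elements are comparable under $\le$. Note $\mathcal V_k(\rho)=\frac1k\mathcal V(\rho^{\otimes k})$, the $\epsilon$-$s$ ensemble of $k$ copies divided by $k$. *)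

(* Defs.v *)
From mathcomp Require Import all_boot all_order all_algebra reals exp complex mxtens.
Set Implicit Arguments. Unset Strict Implicit. Unset Printing Implicit Defensive.
Import Order.TTheory GRing.Theory Num.Theory.
Local Open Scope ring_scope.
Local Open Scope complex_scope.

Section Defs.
Variable R : realType.
Local Notation C := R[i].

Definition adjmx m n (A : 'M[C]_(m, n)) : 'M[C]_(n, m) := map_mx (@conjc R) A^T.

Definition unitary n (U : 'M[C]_n) : Prop := U *m adjmx U = 1%:M.

Definition passive n (K sigma : 'M[C]_n) : Prop :=
  forall U : 'M[C]_n, unitary U ->
    \tr (K *m sigma) <= \tr (K *m (U *m sigma *m adjmx U)).

Fixpoint tenspow d (A : 'M[C]_d) (k : nat) : 'M[C]_(d ^ k) :=
  match k return 'M[C]_(d ^ k) with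
  | 0 => 1%:M
  | k'.+1 => castmx (esym (expnS d k'), esym (expnS d k')) (tensmx A (tenspow A k'))
  end.

(* total Hamiltonian  sum_{i=1}^k H_i  on k copies, H_i = H acting on copy i:
   H_tot(k+1) = H (x) I_{d^k} + I_d (x) H_tot(k) *)
Fixpoint tenssum d (H : 'M[C]_d) (k : nat) : 'M[C]_(d ^ k) :=
  match k return 'M[C]_(d ^ k) with
  | 0 => 0
  | k'.+1 => castmx (esym (expnS d k'), esym (expnS d k'))
               (tensmx H (1%:M : 'M[C]_(d ^ k')) + tensmx (1%:M : 'M[C]_d) (tenssum H k'))
  end.

Definition k_passive d (rho H : 'M[C]_d) (k : nat) : Prop :=
  passive (tenssum H k) (tenspow rho k).

Definition diagR d (x : 'I_d -> R) : 'M[C]_d := diag_mx (\row_i (x i)%:C).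

Definition Vk d (eps p : 'I_d -> R) (k : nat) (v : R * R) : Prop :=
  exists c : 'I_d -> nat, (\sum_i c i)%N = k /\
    v = (k%:R^-1 * \sum_i (c i)%:R * eps i,
         k%:R^-1 * \sum_i (c i)%:R * (- ln (p i))).

Definition le2 (u v : R * R) : Prop := u.1 <= v.1 /\ u.2 <= v.2.

Definition totally_ordered (S : R * R -> Prop) : Prop :=
  forall u v, S u -> S v -> le2 u v \/ le2 v u.

End Defs.

(* Main.v *)
Require Import Defs.
From mathcomp Require Import all_boot all_order all_algebra reals exp complex mxtens.
From mathcomp Require Import perm ring lra.
Import Order.TTheory GRing.Theory Num.Theory.
Local Open Scope ring_scope.

Section Layer.
Variable R : realType.

Lemma layer_aux (I : finType) (n : nat) : forall (E r : I -> R),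
  (#|[set j | [exists l, (E j < E l)%R]]| <= n)%N ->
  \sum_j r j = 0 -> (forall t, 0 <= \sum_(j | t < E j) r j) ->
  0 <= \sum_j E j * r j.
Proof.
elim: n => [|n IH] E r hn hs ht.
  have hall : forall j l, E l <= E j.
    move=> j l; rewrite leNgt; apply/negP => hlt.
    move: hn; rewrite leqn0 => /eqP/cards0_eq/setP/(_ j).
    by rewrite !inE; move/negbT/negP; apply; apply/existsP; exists l.
  case: (pickP (fun _ : I => true)) => [j1 _|h0]; last first.
    by rewrite big_pred0 // => j; rewrite h0.
  have -> : \sum_j E j * r j = E j1 * \sum_j r j.
    rewrite mulr_sumr; apply: eq_bigr => j _; congr (_ * _).
    by apply/eqP; rewrite eq_le !hall.
  by rewrite hs mulr0.
case: (pickP (fun _ : I => true)) => [j1 _|h0]; last first.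
  by rewrite big_pred0 // => j; rewrite h0.
pose jM := [arg max_(j > j1) E j]%O.
have hM : forall j, E j <= E jM.
  by rewrite /jM; case: arg_maxP => // i _ hi j; apply: hi.
case: (pickP (fun j => E j < E jM)) => [j0 hj0|hno]; last first.
  have -> : \sum_j E j * r j = E jM * \sum_j r j.
    rewrite mulr_sumr; apply: eq_bigr => j _; congr (_ * _).
    by apply/eqP; rewrite eq_le hM /= leNgt hno.
  by rewrite hs mulr0.
pose jy := [arg max_(j > j0 | (E j < E jM)%R) E j]%O.
have [hyM hy] : E jy < E jM /\ forall j, E j < E jM -> E j <= E jy.
  by rewrite /jy; case: arg_maxP => // i hi hh; split => // j; apply: hh.
pose y := E jy.
pose E' j := if y < E j then y else E j.
have hE'le : forall j, E' j <= y.
  by move=> j; rewrite /E'; case: ifP => // /negbT; rewrite -leNgt.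
have hbig : forall j, y < E j -> E j = E jM.
  move=> j hj; apply/eqP; rewrite eq_le hM /= leNgt; apply/negP => /hy.
  by rewrite leNgt hj.
have hsplit : \sum_j E j * r j =
   \sum_j E' j * r j + (E jM - y) * \sum_(j | y < E j) r j.
  rewrite mulr_sumr (big_mkcond (fun j => y < E j)) /=. rewrite -big_split /=; apply: eq_bigr => j _.
  rewrite /E'; case: ifP => hj.
    by rewrite (hbig j hj); ring.
  by rewrite addr0.
rewrite hsplit; apply: addr_ge0; last first.
  by apply: mulr_ge0; [rewrite subr_ge0 ltW | apply: ht].
apply: IH => //; last first.
  move=> t; case: (ltP t y) => hty.
    rewrite (eq_bigl (fun j => t < E j)) ?ht // => j.
    rewrite /E'; case: ifP => hj //.
      by rewrite hty; apply/esym; apply: lt_trans hj.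
  rewrite big_pred0 // => j; apply/negbTE; rewrite -leNgt.
  by apply: le_trans (hE'le j) hty.
rewrite -ltnS; apply: leq_trans hn; apply: proper_card; apply/properP; split.
  apply/subsetP => j; rewrite !inE => /existsP [l hl].
  have hjy : E j < y.
    have : E' j < y by apply: lt_le_trans hl (hE'le l).
    by rewrite /E'; case: ifP => //; rewrite ltxx.
  by apply/existsP; exists jM; apply: lt_trans hjy hyM.
exists jy; rewrite !inE.
  by apply/existsP; exists jM.
apply/negP => /existsP [l hl].
have : E' jy = y by rewrite /E' ltxx.
by move=> h; move: hl; rewrite h ltNge hE'le.
Qed.

Lemma layer (I : finType) (E r : I -> R) :
  \sum_j r j = 0 -> (forall t, 0 <= \sum_(j | t < E j) r j) ->
  0 <= \sum_j E j * r j.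
Proof. by move=> hs ht; apply: (@layer_aux I #|[set j | [exists l, (E j < E l)%R]]| E r). Qed.

End Layer.


Section DS.
Variable R : realType.

Lemma ds_ineq (I : finType) (E q : I -> R) (B : I -> I -> R) :
 (forall j a, 0 <= B j a) -> (forall j, \sum_a B j a = 1) ->
 (forall a, \sum_j B j a = 1) ->
 (forall j l, E j < E l -> q l <= q j) ->
 \sum_j E j * q j <= \sum_j \sum_a E j * q a * B j a.
Proof.
move=> hB hrow hcol hanti.
pose r j := \sum_a B j a * q a - q j.
rewrite -subr_ge0.
have -> : \sum_j \sum_a E j * q a * B j a - \sum_j E j * q j = \sum_j E j * r j.
  rewrite -sumrB; apply: eq_bigr => j _.
  rewrite /r mulrBr mulr_sumr; congr (_ - _); apply: eq_bigr => a _; ring.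
apply: layer.
  rewrite /r sumrB exchange_big /=.
  rewrite (eq_bigr (fun a => q a)) ?subrr // => a _.
  by rewrite -mulr_suml hcol mul1r.
move=> t; set A := fun j => t < E j.
case: (pickP A) => [j0 hj0|hno]; last by rewrite big_pred0.
pose jm := [arg max_(j > j0 | A j) q j]%O.
have [hjmA hjm] : A jm /\ forall j, A j -> q j <= q jm.
  by rewrite /jm; case: arg_maxP => // i hi hh; split => // j; apply: hh.
pose M := q jm.
have hout : forall l, ~~ A l -> M <= q l.
  move=> l hl; apply: hanti; apply: le_lt_trans hjmA.
  by move: hl; rewrite /A -leNgt.
have -> : \sum_(j | A j) r j =
   \sum_a (q a - M) * \sum_(j | A j) B j a + \sum_(j | A j) (M - q j).
  under [in RHS]eq_bigr do rewrite mulr_sumr.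
  rewrite [X in _ = X + _]exchange_big /= -big_split /=; apply: eq_bigr => j hj.
  rewrite /r; have := hrow j.
  have -> : \sum_a B j a * q a = \sum_a (q a - M) * B j a + M * \sum_a B j a.
    rewrite mulr_sumr -big_split /=; apply: eq_bigr => a _; ring.
  move=> ->; ring.
have h1 : \sum_(a | A a) (q a - M) <= \sum_a (q a - M) * \sum_(j | A j) B j a.
  rewrite [in X in X <= _]big_mkcond /=; apply: ler_sum => a _.
  case: ifP => ha.
    have hw : \sum_(j | A j) B j a <= 1.
      rewrite -(hcol a) [in X in _ <= X](bigID A) /= lerDl.
      by apply: sumr_ge0.
    have hneg : q a - M <= 0 by rewrite subr_le0 hjm.
    rewrite -subr_ge0 -[X in _ - X]mulr1 -mulrBr.
    by apply: mulr_le0; rewrite // subr_le0.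
  apply: mulr_ge0; first by rewrite subr_ge0 hout ?ha.
  by apply: sumr_ge0.
have h2 : \sum_(a | A a) (q a - M) + \sum_(j | A j) (M - q j) = 0.
  by rewrite -big_split /= big1 // => a _; ring.
by move: h1 h2; set X := \sum_(a | A a) _; set Y := \sum_(j | A j) (M - q j); set Z := \sum_a _; lra.
Qed.

End DS.

Set Implicit Arguments. Unset Strict Implicit.


Section Cx.
Variable R : realType.
Local Notation C := R[i].
Local Open Scope complex_scope.

Definition nrm (z : C) : R := complex.Re z ^+ 2 + complex.Im z ^+ 2.

Lemma mulcJ_nrm (z : C) : z * z^* = (nrm z)%:C.
Proof. case: z => a b; apply/eqP; rewrite eq_complex /= /nrm; apply/andP; split; apply/eqP; rewrite /=; ring. Qed.

Lemma Jmulc_nrm (z : C) : z^* * z = (nrm z)%:C.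
Proof. by rewrite mulrC mulcJ_nrm. Qed.

Lemma nrm_ge0 (z : C) : 0 <= nrm z.
Proof. by rewrite /nrm addr_ge0 // sqr_ge0. Qed.

Lemma tr_formula n (E q : 'I_n -> R) (U : 'M[C]_n) :
  \tr (diagR E *m (U *m diagR q *m adjmx U)) =
  (\sum_j \sum_a E j * q a * nrm (U j a))%:C.
Proof.
rewrite /mxtrace rmorph_sum; apply: eq_bigr => j _.
rewrite /diagR mul_diag_mx !mxE rmorph_sum mulr_sumr; apply: eq_bigr => a _.
rewrite mul_mx_diag !mxE /adjmx ?mxE.
rewrite !rmorphM /= -mulcJ_nrm; ring.
Qed.

Lemma tr_diag n (E q : 'I_n -> R) :
  \tr (diagR E *m diagR q) = (\sum_j E j * q j)%:C.
Proof.
rewrite /mxtrace rmorph_sum; apply: eq_bigr => j _.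
by rewrite mul_diag_mx !mxE eqxx !mulr1n rmorphM.
Qed.

Lemma unitary_rows n (U : 'M[C]_n) : unitary U ->
  (forall j, \sum_a nrm (U j a) = 1) /\ (forall a, \sum_j nrm (U j a) = 1).
Proof.
move=> hU; split.
  move=> j; apply: (@complexI R); rewrite rmorph_sum /=.
  move/matrixP: hU => /(_ j j); rewrite !mxE eqxx mulr1n /= => h.
  rewrite [RHS](_ : _ = (1:C)) // -h.
  by apply: eq_bigr => a _; rewrite /adjmx !mxE mulcJ_nrm.
move=> a; apply: (@complexI R); rewrite rmorph_sum /=.
move/mulmx1C/matrixP: hU => /(_ a a); rewrite !mxE eqxx mulr1n /= => h.
rewrite [RHS](_ : _ = (1:C)) // -h.
by apply: eq_bigr => j _; rewrite /adjmx !mxE Jmulc_nrm.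
Qed.


Lemma perm_mx_entry n (s : {perm 'I_n}) (a b : 'I_n) :
  (perm_mx s : 'M[C]_n) a b = (s a == b)%:R.
Proof. by rewrite /perm_mx !mxE. Qed.

Lemma perm_unitary n (s : {perm 'I_n}) : unitary (perm_mx s : 'M[C]_n).
Proof.
rewrite /unitary; have -> : adjmx (perm_mx s : 'M[C]_n) = (perm_mx s)^T.
  by apply/matrixP => a b; rewrite /adjmx !mxE conjc_nat.
by rewrite tr_perm_mx -perm_mxM mulgV perm_mx1.
Qed.

Lemma passive_diag n (E q : 'I_n -> R) :
  passive (diagR E) (diagR q) <-> (forall j l, E j < E l -> q l <= q j).
Proof.
split; last first.
  move=> h U hU; rewrite tr_diag tr_formula lecR.
  have [hr hc] := unitary_rows hU.
  by apply: ds_ineq => // j a; apply: nrm_ge0.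
move=> hP j l hjl; rewrite leNgt; apply/negP => hql.
have hjl' : j != l by apply/eqP => e; move: hjl; rewrite e ltxx.
pose s := tperm j l.
have := hP _ (perm_unitary s); rewrite tr_diag tr_formula lecR.
have -> : \sum_j0 \sum_a E j0 * q a * nrm ((perm_mx s : 'M[C]_n) j0 a) =
          \sum_j0 E j0 * q (s j0).
  apply: eq_bigr => i _; rewrite (bigD1 (s i)) //= big1 ?addr0.
    by rewrite perm_mx_entry eqxx /nrm /= expr0n /= addr0 expr1n mulr1.
  move=> a ha; rewrite perm_mx_entry eq_sym (negbTE ha) /nrm /= expr0n /= addr0 mulr0.
  done.
apply/negP; rewrite -ltNge -subr_gt0 -sumrB.
rewrite (bigD1 j) //= (bigD1 l) 1?eq_sym //= big1 ?addr0; last first.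
  move=> i /andP [hil hij]; rewrite tpermD 1?eq_sym //; ring.
rewrite /s tpermL tpermR.
have : 0 < (E l - E j) * (q l - q j) by apply: mulr_gt0; rewrite subr_gt0.
lra.
Qed.

End Cx.

Set Implicit Arguments. Unset Strict Implicit.

Section Tens.
Variable R : realType.
Local Notation C := R[i].
Local Open Scope complex_scope.
Variable d : nat.

Definition splitI k (a : 'I_(d ^ k.+1)) : 'I_d * 'I_(d ^ k) :=
  mxtens_unindex (cast_ord (expnS d k) a).

Arguments splitI : simpl never.

Lemma splitI_index k i (a : 'I_(d ^ k)) :
  splitI (cast_ord (esym (expnS d k)) (mxtens_index (i, a))) = (i, a).
Proof. by rewrite /splitI cast_ordKV mxtens_indexK. Qed.

Fixpoint digs k : 'I_(d ^ k) -> seq 'I_d :=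
  match k return 'I_(d ^ k) -> seq 'I_d with
  | 0 => fun _ => [::]
  | k'.+1 => fun a => (splitI a).1 :: digs (splitI a).2
  end.

Lemma digsS k (a : 'I_(d ^ k.+1)) : digs a = (splitI a).1 :: digs (splitI a).2.
Proof. by []. Qed.

Lemma splitI_inj k : injective (@splitI k).
Proof.
move=> a b h; apply: (cast_ord_inj (eq_n := expnS d k)).
by apply: (can_inj (@mxtens_unindexK d (d ^ k))).
Qed.

Lemma cast_irr m n (e1 e2 : m = n) (i : 'I_m) : cast_ord e1 i = cast_ord e2 i.
Proof. by apply: val_inj. Qed.

Lemma eq_split k (a b : 'I_(d ^ k.+1)) :
  (a == b) = ((splitI a).1 == (splitI b).1) && ((splitI a).2 == (splitI b).2).
Proof. by rewrite -xpair_eqE -surjective_pairing -surjective_pairing (inj_eq (@splitI_inj k)). Qed.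

Lemma bool_mul (x y : R) (u v : bool) :
  (x%:C *+ u) * (y%:C *+ v) = (x * y)%:C *+ (u && v) :> C.
Proof. by case: u; case: v; rewrite /= ?mulr1n ?mulr0n ?mul0r ?mulr0 ?rmorphM. Qed.

Lemma tenspow_diag (p : 'I_d -> R) k :
  tenspow (diagR p) k = diagR (fun a => \prod_(i <- digs a) p i).
Proof.
elim: k => [|k IH].
  by apply/matrixP => a b; rewrite /diagR !mxE big_nil.
apply/matrixP => a b; rewrite /= castmxE /tensmx mxE IH.
rewrite !(cast_irr (esym (esym (expnS d k))) (expnS d k)).
rewrite /diagR !mxE big_cons eq_split.
exact: bool_mul.
Qed.

Lemma tenssum_diag (e : 'I_d -> R) k :
  tenssum (diagR e) k = diagR (fun a => \sum_(i <- digs a) e i).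
Proof.
elim: k => [|k IH].
  by apply/matrixP => a b; rewrite /diagR !mxE big_nil mul0rn.
apply/matrixP => a b; rewrite /= castmxE !mxE IH.
rewrite !(cast_irr (esym (esym (expnS d k))) (expnS d k)).
rewrite /diagR !mxE big_cons eq_split -/(splitI a) -/(splitI b).
by case: (_ == _); case: (_ == _); rewrite /= ?mulr1n ?mulr0n ?mul0r ?mulr0 ?add0r ?addr0 ?mul1r ?mulr1 ?rmorphD.
Qed.

Lemma size_digs k (a : 'I_(d ^ k)) : size (digs a) = k.
Proof. by elim: k a => [|k IH] a //=; rewrite IH. Qed.

Lemma digs_surj k (s : seq 'I_d) : size s = k -> exists a : 'I_(d ^ k), digs a = s.
Proof.
elim: k s => [|k IH] [|i s] // hs.
  by exists (cast_ord (esym (expn0 d)) ord0).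
have /IH [a' ha'] : size s = k by move: hs => /= [].
exists (cast_ord (esym (expnS d k)) (mxtens_index (i, a'))).
by rewrite digsS splitI_index ha'.
Qed.

End Tens.

Set Implicit Arguments. Unset Strict Implicit.

Section Cnt.
Variable R : realType.
Variable d : nat.

Lemma sum_count (f : 'I_d -> R) (s : seq 'I_d) :
  \sum_(i <- s) f i = \sum_i (count_mem i s)%:R * f i.
Proof.
elim: s => [|x s IH].
  by rewrite big_nil big1 // => i _; rewrite mul0r.
rewrite big_cons IH /=.
under [RHS]eq_bigr do rewrite natrD mulrDl.
rewrite big_split /=; congr (_ + _).
rewrite (bigD1 x) //= eqxx mul1r big1 ?addr0 // => i hi.
by rewrite eq_sym (negbTE hi) mul0r.
Qed.

Lemma sum_count_nat (s : seq 'I_d) : (\sum_i count_mem i s)%N = size s.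
Proof.
elim: s => [|x s IH].
  by rewrite big1.
rewrite /= big_split /= IH (bigD1 x) //= eqxx big1 // => i hi.
by rewrite eq_sym (negbTE hi).
Qed.

Lemma ln_prod (p : 'I_d -> R) (s : seq 'I_d) : (forall i, 0 < p i) ->
  - ln (\prod_(i <- s) p i) = \sum_(i <- s) - ln (p i).
Proof.
move=> hp; elim: s => [|x s IH]; first by rewrite !big_nil ln1 oppr0.
by rewrite !big_cons lnM ?posrE ?hp ?prodr_gt0 // opprD IH.
Qed.

Lemma build_seq (c : 'I_d -> nat) :
  exists s : seq 'I_d, size s = (\sum_i c i)%N /\ forall j, count_mem j s = c j.
Proof.
exists (\big[cat/[::]]_i nseq (c i) i); split.
  rewrite (@big_morph nat (seq 'I_d) (@size 'I_d) 0%N addn [::] cat (@size_cat 'I_d) erefl).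
  by apply: eq_bigr => i _; rewrite size_nseq.
move=> j.
rewrite (@big_morph nat (seq 'I_d) (count (pred1 j)) 0%N addn [::] cat (count_cat (pred1 j)) erefl).
rewrite (bigD1 j) //= count_nseq /= eqxx mul1n big1 ?addn0 // => i hi.
by rewrite count_nseq /= (negbTE hi).
Qed.

End Cnt.

Local Open Scope complex_scope.

Theorem lemma2 (R : realType) (d : nat) (eps p : 'I_d -> R) (k : nat) :
  (0 < k)%N ->
  (forall i, 0 < p i) -> \sum_i p i = 1 ->
  k_passive (diagR p) (diagR eps) k <->
  (diagR p *m diagR eps = diagR eps *m diagR p /\ totally_ordered (Vk eps p k)).
Proof.
move=> hk hp _.
pose q := fun a : 'I_(d ^ k) => \prod_(i <- digs a) p i.
pose E := fun a : 'I_(d ^ k) => \sum_(i <- digs a) eps i.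
have hq : forall a, 0 < q a by move=> a; apply: prodr_gt0.
pose kinv : R := k%:R^-1.
have hki : 0 < kinv by rewrite /kinv invr_gt0 ltr0n.
pose pt a := (kinv * E a, kinv * - ln (q a)).
have hV : forall v, Vk eps p k v <-> exists a, v = pt a.
  move=> v; split.
    move=> [c [hc ->]].
    have [s [hs hcnt]] := build_seq c.
    have [a ha] := digs_surj (etrans hs hc).
    exists a; rewrite /pt /E /q ln_prod // (sum_count eps (digs a)).
    rewrite (sum_count (fun i => - ln (p i)) (digs a)) ha.
    by congr (_, _); congr (_ * _); apply: eq_bigr => i _; rewrite hcnt.
  move=> [a ->]; exists (fun i => count_mem i (digs a)); split.
    by rewrite sum_count_nat size_digs.
  rewrite /pt /E /q ln_prod // (sum_count eps (digs a)).
  by rewrite (sum_count (fun i => - ln (p i)) (digs a)).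
have hlnle : forall a b, (- ln (q a) <= - ln (q b)) = (q b <= q a).
  by move=> a b; rewrite lerN2 ler_ln ?posrE.
rewrite /k_passive tenspow_diag tenssum_diag passive_diag -/q -/E.
split.
  move=> hP; split; first exact: diag_mxC.
  move=> u v /hV [a ->] /hV [b ->]; rewrite /le2 /= !ler_pM2l //.
  case: (ltgtP (E a) (E b)) => h.
  - by left; split => //; rewrite hlnle; apply: hP.
  - by right; split => //; rewrite hlnle; apply: hP.
  - case/orP: (le_total (- ln (q a)) (- ln (q b))) => h'.
      by left; split.
    by right; split.
move=> [_ hT] a b hab.
have := hT (pt a) (pt b) (proj2 (hV _) (ex_intro _ a erefl))
                          (proj2 (hV _) (ex_intro _ b erefl)).
rewrite /le2 /= !ler_pM2l //; case=> [[_ h]|[h _]].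
  by rewrite -hlnle.
by move: h; rewrite leNgt hab.
Qed.
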